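(* Let $n\ge1$, $d\ge2$ and fix $p$ with $1\le p\le d-1$. Let $\phi_v:\mathbf H_d\to\mathbf H_{d+1}$ be the $\mathbb Q(v)$-algebra homomorphism with $\phi_v(T_i)=T_i$ for $1\le i<p$, $\phi_v(T_p)=T_pT_{p+1}T_p^{-1}$, and $\phi_v(T_i)=T_{i+1}$ for $p<i\le d-1$. Let $\phi^{\mathbf T}_1:\mathbf T_{n,d}\to\mathbf T_{n+1,d+1}$ be the $\mathbb Q(v)$-linear map \[ [r_1,\dots,r_d]\mapsto[r_1,\dots,r_p,\,n+1,\,r_{p+1},\dots,r_d]\qquad(1\le r_k\le n). \] Then for all $x\in\mathbf T_{n,d}$ and $h\in\mathbf H_d$, $\phi^{\mathbf T}_1(x\cdot h)=\phi^{\mathbf T}_1(x)\cdot\phi_v(h)$.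
   Context: $\mathbf H_d$ is the $\mathbb Q(v)$-algebra generated by $T_1,\dots,T_{d-1}$ with relations $(T_i-v)(T_i+v^{-1})=0$, $T_iT_{i+1}T_i=T_{i+1}T_iT_{i+1}$, and $T_iT_j=T_jT_i$ for $|i-j|\ge2$ (the Hecke algebra of type $A_{d-1}$ with equal parameters, tensored up to $\mathbb Q(v)$). $\mathbf V_n$ is the $\mathbb Q(v)$-vector space with basis $e_1,\dots,e_n$, $\mathbf T_{n,d}=\mathbf V_n^{\otimes d}$, and $[r_1,\dots,r_d]:=e_{r_1}\otimes\cdots\otimes e_{r_d}$. $\mathbf T_{n,d}$ is a right $\mathbf H_d$-module via, for $1\le i\le d-1$: $[\dots,r_i,r_{i+1},\dots]\cdot T_i=[\dots,r_{i+1},r_i,\dots]$ if $r_i<r_{i+1}$; $=v[\dots,r_i,r_{i+1},\dots]$ if $r_i=r_{i+1}$; $=(v-v^{-1})[\dots,r_i,r_{i+1},\dots]+[\dots,r_{i+1},r_i,\dots]$ if $r_i>r_{i+1}$ (only positions $i,i+1$ change). The map $\phi_v$ is the edge-contraction embedding of Hecke algebras for type $A_d$ along the edge $\{p,p+1\}$ (with $s_+=p$, $s_-=p+1$), and is a well-defined algebra homomorphism. *)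

(* Defs.v *)
From HB Require Import structures.
From mathcomp Require Import all_boot all_order all_algebra.
Set Implicit Arguments. Unset Strict Implicit. Unset Printing Implicit Defensive.
Import GRing.Theory.
Local Open Scope ring_scope.

Definition Qv : fieldType := {fraction {poly rat}}.
Definition v : Qv := FracField.tofrac ('X : {poly rat}).

(* Basis indices of T_{n,d} = V_n^{(x)d}: functions from positions 'I_d
   (0-based) to values 'I_n (value k : 'I_n stands for e_{k+1}). *)
Notation idx n d := {ffun 'I_d -> 'I_n}.

Notation tens n d := {ffun idx n d -> Qv^o}.

Definition bvec n d (r : idx n d) : tens n d := [ffun s => (s == r)%:R].

Definition ent n d (r : idx n d) (j : nat) : nat :=
  if insub j is Some k then val (r k) else 0%N.

(* 1-based generator index i swaps 0-based positions i-1 and i *)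
Definition swapnat (i k : nat) : nat :=
  if k == i.-1 then i else if k == i then i.-1 else k.

Definition swapidx n d (i : nat) (r : idx n d) : idx n d :=
  [ffun k : 'I_d => r (insubd k (swapnat i k))].

Definition actB n d (i : nat) (r : idx n d) : tens n d :=
  let a := ent r i.-1 in let b := ent r i in
  if (a < b)%N then bvec (swapidx i r)
  else if a == b then v *: bvec r
  else (v - v^-1) *: bvec r + bvec (swapidx i r).

Definition actT n d (i : nat) (x : tens n d) : tens n d :=
  \sum_(r : idx n d) x r *: actB i r.

(* Elements of H_d are written via the generators T_i (1 <= i <= d-1) and
   their inverses: a letter (i, false) is T_i, (i, true) is T_i^{-1}.
   A word is a product of letters; an element of H_d is a Q(v)-linear
   combination of words. *)
Definition letter := (nat * bool)%type.
Definition word := seq letter.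
Definition hexpr := seq (Qv * word).

Definition valid_word (d : nat) (w : word) : bool :=
  all (fun l : letter => (1 <= l.1 <= d.-1)%N) w.
Definition valid_hexpr (d : nat) (h : hexpr) : bool :=
  all (fun cw : Qv * word => valid_word d cw.2) h.

(* action of a letter; T_i^{-1} = T_i - (v - v^{-1}) in H_d *)
Definition actL n d (x : tens n d) (l : letter) : tens n d :=
  if l.2 then actT l.1 x - (v - v^-1) *: x else actT l.1 x.

Definition actW n d (x : tens n d) (w : word) : tens n d := foldl (@actL n d) x w.
Definition actH n d (x : tens n d) (h : hexpr) : tens n d :=
  \sum_(cw <- h) cw.1 *: actW x cw.2.

Definition phiL (p : nat) (l : letter) : word :=
  let: (i, b) := l in
  if (i < p)%N then [:: (i, b)]
  else if i == p then
    (if b then [:: (p, false); (p.+1, true); (p, true)]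
          else [:: (p, false); (p.+1, false); (p, true)])
  else [:: (i.+1, b)].
Definition phiW (p : nat) (w : word) : word := flatten (map (phiL p) w).
Definition phiH (p : nat) (h : hexpr) : hexpr :=
  map (fun cw : Qv * word => (cw.1, phiW p cw.2)) h.

Definition insidx n d (p : nat) (r : idx n d) : idx n.+1 d.+1 :=
  [ffun k : 'I_d.+1 =>
     if (k : nat) == p then ord_max
     else if insub (if (k < p)%N then (k : nat) else k.-1) is Some j
          then widen_ord (leqnSn n) (r j) else ord_max].

Definition phiT n d (p : nat) (x : tens n d) : tens n.+1 d.+1 :=
  \sum_(r : idx n d) x r *: bvec (insidx p r).

(* Main.v *)
Require Import Defs.
From mathcomp Require Import all_boot all_order all_algebra zify.
Set Implicit Arguments. Unset Strict Implicit. Unset Printing Implicit Defensive.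
Import GRing.Theory.
Local Open Scope ring_scope.

Lemma ent_out n d (r : idx n d) j : (d <= j)%N -> ent r j = 0%N.
Proof. by move=> H; rewrite /ent insubN // -leqNgt. Qed.

Lemma ent_ord n d (r : idx n d) j (H : (j < d)%N) : ent r j = val (r (Ordinal H)).
Proof. by rewrite /ent insubT. Qed.

Lemma idx_eq n d (r s : idx n d) : (forall j, (j < d)%N -> ent r j = ent s j) -> r = s.
Proof.
move=> H; apply/ffunP => k; apply: val_inj.
have := H k (ltn_ord k); rewrite !(ent_ord _ (ltn_ord k)).
by have -> : Ordinal (ltn_ord k) = k by apply: val_inj.
Qed.

Lemma ent_swap n d i (r : idx n d) j : (i < d)%N -> ent (swapidx i r) j = ent r (swapnat i j).
Proof.
move=> Hi; case: (ltnP j d) => Hj; last first.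
  have -> : swapnat i j = j by rewrite /swapnat; case: ifP => ?; [|case: ifP => ?]; lia.
  by rewrite !ent_out.
have Hs : (swapnat i j < d)%N by rewrite /swapnat; case: ifP => ?; [|case: ifP => ?]; lia.
rewrite (ent_ord _ Hj) (ent_ord _ Hs) /swapidx ffunE /insubd.
case: insubP => [k _ Hk|]; last by rewrite /= Hs.
by rewrite /=; congr (val (r _)); apply: val_inj; rewrite Hk.
Qed.

Lemma ent_ins n d p (Hp : (p <= d)%N) (r : idx n d) j :
  ent (insidx p r) j = if j == p then n else if (j < p)%N then ent r j else ent r j.-1.
Proof.
case: (ltnP j d.+1) => Hj; last first.
  rewrite (ent_out (insidx p r) Hj) (ent_out r (_ : (d <= j.-1)%N)); last lia.
  case: ifP => ?; [lia|]; case: ifP => ?; lia.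
rewrite (ent_ord _ Hj) /insidx ffunE /=.
case: eqP => // Hne.
case: ifP => Hjp; rewrite /ent; case: insubP => [k _ Hk|] //=.
all: lia.
Qed.

Definition islin n d m e (f : tens n d -> tens m e) :=
  forall (c : Qv) x y, f (c *: x + y) = c *: f x + f y.

Section Lin.
Variables n d m e : nat.
Implicit Types (x y : tens n d) (r s : idx n d).

Lemma addE x y r : (x + y) r = x r + y r.
Proof. by rewrite /= ffunE. Qed.
Lemma scaleE (c : Qv) x r : (c *: x) r = c * x r.
Proof. by rewrite /= ffunE. Qed.

Lemma bvecE s r : bvec s r = (r == s)%:R.
Proof. by rewrite ffunE. Qed.

Lemma tens_decomp x : x = \sum_r x r *: bvec r.
Proof.
apply/ffunP => s; rewrite sum_ffunE (bigD1 s) //= big1 ?addr0.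
  by rewrite scaleE bvecE eqxx mulr1.
by move=> r Hr; rewrite scaleE bvecE eq_sym (negbTE Hr) mulr0.
Qed.

Lemma lin_form (F : idx n d -> tens m e) : islin (fun x => \sum_r x r *: F r).
Proof.
move=> c x y; rewrite scaler_sumr -big_split; apply: eq_bigr => r _.
by rewrite addE scaleE scalerDl scalerA.
Qed.

Lemma form_bvec (F : idx n d -> tens m e) s : \sum_r bvec s r *: F r = F s.
Proof.
rewrite (bigD1 s) //= big1 ?addr0; first by rewrite bvecE eqxx scale1r.
by move=> r Hr; rewrite bvecE (negbTE Hr) scale0r.
Qed.

Variable f : tens n d -> tens m e.
Hypothesis hf : islin f.

Lemma lin0 : f 0 = 0.
Proof.
have := hf 1 0 0; rewrite !scale1r addr0 => H.
by rewrite -[LHS]addr0 -(subrr (f 0)) addrA -H subrr.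
Qed.
Lemma linD x y : f (x + y) = f x + f y.
Proof. by rewrite -{1}(scale1r x) hf scale1r. Qed.
Lemma linZ c x : f (c *: x) = c *: f x.
Proof. by rewrite -(addr0 (c *: x)) hf lin0 addr0. Qed.
Lemma linB x y : f (x - y) = f x - f y.
Proof. by rewrite addrC -scaleN1r hf scaleN1r addrC. Qed.
Lemma lin_sum (I : Type) (s : seq I) (F : I -> tens n d) :
  f (\sum_(i <- s) F i) = \sum_(i <- s) f (F i).
Proof. by apply: (big_morph f linD lin0). Qed.

End Lin.

Lemma lin_ext n d m e (f g : tens n d -> tens m e) : islin f -> islin g ->
  (forall r, f (bvec r) = g (bvec r)) -> forall x, f x = g x.
Proof.
move=> hf hg H x; rewrite (tens_decomp x) (lin_sum hf) (lin_sum hg).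
by apply: eq_bigr => r _; rewrite (linZ hf) (linZ hg) H.
Qed.

Lemma lin_comp n d m e k l (f : tens n d -> tens m e) (g : tens m e -> tens k l) :
  islin f -> islin g -> islin (fun x => g (f x)).
Proof. by move=> hf hg c x y; rewrite hf hg. Qed.

Lemma lin_actT n d i : islin (@actT n d i).
Proof. exact: lin_form. Qed.
Lemma lin_phiT n d p : islin (@phiT n d p).
Proof. exact: lin_form. Qed.
Lemma actT_bvec n d i (s : idx n d) : actT i (bvec s) = actB i s.
Proof. exact: form_bvec. Qed.
Lemma phiT_bvec n d p (s : idx n d) : phiT p (bvec s) = bvec (insidx p s).
Proof. exact: form_bvec. Qed.

Lemma lin_actL n d l : islin (fun x => @actL n d x l).
Proof.
rewrite /actL; case: l.2 => c x y; last exact: lin_actT.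
rewrite (lin_actT _ c x y) scalerDr scalerA mulrC -scalerA; set a := actT _ x.
rewrite opprD addrACA; congr (_ + _).
by rewrite scalerBr.
Qed.

Lemma lin_actW n d w : islin (fun x => @actW n d x w).
Proof.
elim: w => [|l w IH] /=; first by [].
exact: (lin_comp (lin_actL l) IH).
Qed.

Lemma v_neq0 : v != 0.
Proof. by rewrite /v tofrac_eq0 polyX_eq0. Qed.

Notation c := (v - v^-1).

Lemma swapnatK i j : (0 < i)%N -> swapnat i (swapnat i j) = j.
Proof.
move=> H; rewrite /swapnat; case: (j =P i.-1) => [E|E]; case: (j =P i) => [E'|E'] /=;
  repeat (case: ifP => /eqP ?); lia.
Qed.

Section Basis.
Variables n d : nat.
Implicit Types (r s : idx n d).

Lemma actB_lt i r : (ent r i.-1 < ent r i)%N -> actB i r = bvec (swapidx i r).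
Proof. by rewrite /actB /= => ->. Qed.
Lemma actB_eq i r : ent r i.-1 = ent r i -> actB i r = v *: bvec r.
Proof. by rewrite /actB /= => ->; rewrite ltnn eqxx. Qed.
Lemma actB_gt i r : (ent r i < ent r i.-1)%N -> actB i r = c *: bvec r + bvec (swapidx i r).
Proof.
rewrite /actB /= => H; rewrite ltnNge (ltnW H) /=.
by rewrite ifF //; apply/negbTE; rewrite neq_ltn H orbT.
Qed.

Lemma swap_ent1 i r : (0 < i < d)%N -> ent (swapidx i r) i.-1 = ent r i.
Proof. move=> /andP[H0 H]; rewrite ent_swap //; congr ent; rewrite /swapnat eqxx; lia. Qed.
Lemma swap_ent2 i r : (0 < i < d)%N -> ent (swapidx i r) i = ent r i.-1.
Proof. move=> /andP[H0 H]; rewrite ent_swap //; congr ent; rewrite /swapnat; case: ifP => ?; [lia|]; by rewrite eqxx. Qed.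
Lemma swap_inv i r : (0 < i < d)%N -> swapidx i (swapidx i r) = r.
Proof.
move=> /andP[H0 H]; apply: idx_eq => j _; rewrite !ent_swap //; congr ent.
exact: swapnatK.
Qed.

Lemma quad i (y : tens n d) : (0 < i < d)%N -> actL (actT i y) (i, true) = y.
Proof.
move=> Hi.
apply: (@lin_ext _ _ _ _ (fun y => actL (actT i y) (i, true)) id); last first.
- move=> r /=; rewrite /actL /= actT_bvec.
  have [Hlt|Hgt|Heq] := ltngtP (ent r i.-1) (ent r i).
  + rewrite (actB_lt Hlt) actT_bvec actB_gt; last by rewrite swap_ent1 // swap_ent2.
    by rewrite swap_inv // addrAC subrr add0r.
  + rewrite (actB_gt Hgt) (linD (@lin_actT _ _ i)) (linZ (@lin_actT _ _ i)) !actT_bvec.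
    rewrite (actB_gt Hgt) actB_lt; last by rewrite swap_ent1 // swap_ent2.
    by rewrite swap_inv // addrAC subrr add0r.
  + rewrite (actB_eq Heq) (linZ (@lin_actT _ _ i)) actT_bvec (actB_eq Heq) !scalerA -scalerBl.
    have -> : v * v - c * v = 1 by rewrite mulrBl opprB addrCA subrr addr0 mulVf // v_neq0.
    by rewrite scale1r.
- by [].
- exact: (lin_comp (@lin_actT _ _ i) (lin_actL (i, true))).
Qed.
End Basis.

Lemma ent_lt n d (r : idx n d) j : (j < d)%N -> (ent r j < n)%N.
Proof. by move=> H; rewrite (ent_ord _ H) ltn_ord. Qed.

Ltac split_ifs :=
  repeat (match goal with |- context [if ?b then _ else _] =>
    lazymatch b with context [if _ then _ else _] => fail | _ =>
      let E := fresh "E" in case E: b; cbv iota end end).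
Ltac solve_ent := rewrite /swapnat; split_ifs; try (congr ent; lia); try lia.

Section Phi.
Variables n d p : nat.
Hypothesis Hp0 : (0 < p)%N.
Hypothesis Hpd : (p < d)%N.
Let Hp : (p <= d)%N := ltnW Hpd.
Implicit Types (r : idx n d).

Lemma swap_ins_lt i r : (0 < i < p)%N -> swapidx i (insidx p r) = insidx p (swapidx i r).
Proof.
move=> /andP[Hi0 Hip]; have Hi : (i < d)%N by lia. have Hi' : (i < d.+1)%N by lia.
apply: idx_eq => j Hj.
rewrite (ent_swap _ _ Hi') !(ent_ins Hp) !(ent_swap _ _ Hi).
solve_ent.
Qed.

Lemma swap_ins_gt i r : (p < i < d)%N -> swapidx i.+1 (insidx p r) = insidx p (swapidx i r).
Proof.
move=> /andP[Hip Hid]; have Hi' : (i.+1 < d.+1)%N by lia.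
apply: idx_eq => j Hj.
rewrite (ent_swap _ _ Hi') !(ent_ins Hp) !(ent_swap _ _ Hid).
solve_ent.
Qed.

Lemma swap_ins_eq r :
  swapidx p (insidx p (swapidx p r)) = swapidx p.+1 (swapidx p (insidx p r)).
Proof.
have Hi' : (p.+1 < d.+1)%N by lia. have Hi'' : (p < d.+1)%N by lia.
apply: idx_eq => j Hj.
rewrite !(ent_swap _ _ Hi') !(ent_swap _ _ Hi'') !(ent_ins Hp) !(ent_swap _ _ Hpd).
solve_ent.
Qed.


Lemma phi_lt i r : (0 < i < p)%N -> phiT p (actB i r) = actB i (insidx p r).
Proof.
move=> Hi; have E1 : ent (insidx p r) i.-1 = ent r i.-1 by rewrite (ent_ins Hp); solve_ent.
have E2 : ent (insidx p r) i = ent r i by rewrite (ent_ins Hp); solve_ent.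
have [H|H|H] := ltngtP (ent r i.-1) (ent r i).
- by rewrite actB_lt // actB_lt ?E1 ?E2 // phiT_bvec swap_ins_lt.
- rewrite actB_gt // actB_gt ?E1 ?E2 //.
  by rewrite (linD (@lin_phiT _ _ p)) (linZ (@lin_phiT _ _ p)) !phiT_bvec swap_ins_lt.
- by rewrite actB_eq // actB_eq ?E1 ?E2 // (linZ (@lin_phiT _ _ p)) phiT_bvec.
Qed.

Lemma phi_gt i r : (p < i < d)%N -> phiT p (actB i r) = actB i.+1 (insidx p r).
Proof.
move=> Hi; have E1 : ent (insidx p r) i.+1.-1 = ent r i.-1 by rewrite (ent_ins Hp); solve_ent.
have E2 : ent (insidx p r) i.+1 = ent r i by rewrite (ent_ins Hp); solve_ent.
have [H|H|H] := ltngtP (ent r i.-1) (ent r i).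
- by rewrite actB_lt // actB_lt ?E1 ?E2 // phiT_bvec swap_ins_gt.
- rewrite actB_gt // actB_gt ?E1 ?E2 //.
  by rewrite (linD (@lin_phiT _ _ p)) (linZ (@lin_phiT _ _ p)) !phiT_bvec swap_ins_gt.
- by rewrite actB_eq // actB_eq ?E1 ?E2 // (linZ (@lin_phiT _ _ p)) phiT_bvec.
Qed.

Lemma phi_eq r : actT p (phiT p (actB p r)) = actB p.+1 (swapidx p (insidx p r)).
Proof.
have Hi' : (p.+1 < d.+1)%N by lia. have Hi'' : (p < d.+1)%N by lia.
have Hpn : (ent r p.-1 < n)%N by apply: ent_lt; lia.
have E1 : ent (swapidx p (insidx p r)) p.+1.-1 = ent r p.-1
  by rewrite (ent_swap _ _ Hi'') (ent_ins Hp); solve_ent.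
have E2 : ent (swapidx p (insidx p r)) p.+1 = ent r p
  by rewrite (ent_swap _ _ Hi'') (ent_ins Hp); solve_ent.
have F1 : forall r' : idx n d, ent (insidx p r') p.-1 = ent r' p.-1
  by move=> r'; rewrite (ent_ins Hp); solve_ent.
have F2 : forall r' : idx n d, ent (insidx p r') p = n
  by move=> r'; rewrite (ent_ins Hp); solve_ent.
have Hb : (ent r p < n)%N by apply: ent_lt.
have [H|H|H] := ltngtP (ent r p.-1) (ent r p).
- rewrite actB_lt // phiT_bvec actT_bvec actB_lt; last first.
    by rewrite F1 F2 swap_ent1 //; lia.
  by rewrite actB_lt ?E1 ?E2 // swap_ins_eq.
- rewrite actB_gt // (linD (@lin_phiT _ _ p)) (linZ (@lin_phiT _ _ p)) !phiT_bvec.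
  rewrite (linD (@lin_actT _ _ p)) (linZ (@lin_actT _ _ p)) !actT_bvec.
  rewrite actB_lt; last by rewrite F1 F2.
  rewrite actB_lt; last by rewrite F1 F2 swap_ent1 //; lia.
  by rewrite actB_gt ?E1 ?E2 // swap_ins_eq.
- rewrite actB_eq // (linZ (@lin_phiT _ _ p)) phiT_bvec (linZ (@lin_actT _ _ p)) actT_bvec.
  by rewrite actB_lt ?F1 ?F2 // actB_eq // E1 E2.
Qed.

Lemma actB_ins_p r : actB p (insidx p r) = bvec (swapidx p (insidx p r)).
Proof.
have Hpn : (ent r p.-1 < n)%N by apply: ent_lt; lia.
by apply: actB_lt; rewrite !(ent_ins Hp); solve_ent.
Qed.

Lemma commT i i' : (forall r : idx n d, phiT p (actB i r) = actB i' (insidx p r)) ->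
  forall x : tens n d, phiT p (actT i x) = actT i' (phiT p x).
Proof.
move=> H; apply: lin_ext.
- exact: (lin_comp (@lin_actT _ _ i) (@lin_phiT _ _ p)).
- exact: (lin_comp (@lin_phiT _ _ p) (@lin_actT _ _ i')).
- by move=> r; rewrite actT_bvec phiT_bvec actT_bvec H.
Qed.

Lemma claimC (x : tens n d) : actT p (phiT p (actT p x)) = actT p.+1 (actT p (phiT p x)).
Proof.
move: x; apply: lin_ext.
- exact: (lin_comp (lin_comp (@lin_actT _ _ p) (@lin_phiT _ _ p)) (@lin_actT _ _ p)).
- exact: (lin_comp (lin_comp (@lin_phiT _ _ p) (@lin_actT _ _ p)) (@lin_actT _ _ p.+1)).
- move=> r; rewrite actT_bvec phi_eq phiT_bvec actT_bvec actB_ins_p.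
  by rewrite actT_bvec.
Qed.

Lemma letterL (x : tens n d) (l : letter) : (1 <= l.1 <= d.-1)%N ->
  phiT p (actL x l) = actW (phiT p x) (phiL p l).
Proof.
case: l => i b /= Hi.
have Hq : (0 < p < d.+1)%N by lia.
case: ltngtP => Hip.
- have H := commT (fun r => phi_lt r (_ : (0 < i < p)%N)).
  rewrite /actW /= /actL /=; case: b.
  + by rewrite (linB (@lin_phiT _ _ p)) (linZ (@lin_phiT _ _ p)) H //; lia.
  + by rewrite H //; lia.
- have H := commT (fun r => phi_gt r (_ : (p < i < d)%N)).
  rewrite /actW /= /actL /=; case: b.
  + by rewrite (linB (@lin_phiT _ _ p)) (linZ (@lin_phiT _ _ p)) H //; lia.
  + by rewrite H //; lia.
- subst i; case: b; rewrite /actW /=.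
  + rewrite {1}/actL /= (linB (@lin_phiT _ _ p)) (linZ (@lin_phiT _ _ p)).
    by rewrite {2}/actL /= (linB (lin_actL _)) (linZ (lin_actL _)) -claimC !quad.
  + rewrite -[actL x (p,false)]/(actT p x) -[actL (phiT p x) (p,false)]/(actT p (phiT p x)).
    by rewrite -[actL (actT p _) (p.+1,false)]/(actT p.+1 (actT p (phiT p x))) -claimC quad.
Qed.
End Phi.

Lemma wordL n d p x (w : word) : (0 < p)%N -> (p < d)%N -> valid_word d w ->
  @phiT n d p (actW x w) = actW (phiT p x) (phiW p w).
Proof.
move=> H0 H1; elim: w x => [|l w IH] x //= /andP[Hl Hw].
rewrite IH // (letterL H0 H1) //.
by rewrite /actW /phiW /= foldl_cat.
Qed.
Unset Implicit Arguments.

Theorem mainTheorem10 (n d p : nat) :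
  (1 <= n)%N -> (2 <= d)%N -> (1 <= p <= d.-1)%N ->
  forall (x : tens n d) (h : hexpr), valid_hexpr d h ->
    phiT p (actH x h) = actH (phiT p x) (phiH p h).
Proof.
move=> _ Hd /andP[H0 H1] x h; have H1' : (p < d)%N by lia.
rewrite /actH /phiH big_map (lin_sum (@lin_phiT _ _ p)).
elim: h => [|cw h IH] /=; first by rewrite !big_nil.
move=> /andP[Hw Hh]; rewrite !big_cons IH // (linZ (@lin_phiT _ _ p)).
by rewrite wordL.
Qed.
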